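(* Let $X$ be a real Banach space and let $C\subseteq B_{X^*}$ be a nonempty convex $w^*$-compact set such that every convex combination of slices of $C$ has diameter $2$. Then $K=\mathrm{co}(C\cup(-C))$ is a $w^*$-compact convex subset of $B_{X^*}$ such that every convex combination of slices of $K$ has diameter $2$.
   Context: For a bounded set $A$ in a Banach space $Z$ (here $Z=X^*$), a slice of $A$ is a nonempty set of the form $S(A,\phi,\alpha)=\{a\in A: \phi(a)>\sup_A\phi-\alpha\}$ with $\phi\in Z^*\setminus\{0\}$ and $\alpha>0$. A convex combination of slices of $A$ is a Minkowski sum $\sum_{i=1}^n\lambda_iS_i=\{\sum_i\lambda_is_i: s_i\in S_i\}$ where $S_i$ are slices of $A$, $\lambda_i>0$ and $\sum_i\lambda_i=1$. $\mathrm{co}$ denotes the convex hull. *)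

(* Defs.v *)
From HB Require Import structures.
From mathcomp Require Import all_boot all_order all_algebra.
From mathcomp Require Import all_classical all_reals all_analysis.
Set Implicit Arguments. Unset Strict Implicit. Unset Printing Implicit Defensive.
Import Order.TTheory GRing.Theory Num.Theory.
Import numFieldNormedType.Exports.
Local Open Scope classical_set_scope.
Local Open Scope ring_scope.

(* The weak-star topology on X^* is the topology of
   pointwise convergence, i.e. the subspace topology of {ptws X -> R}. *)

Section Dual.
Variables (R : realType) (X : normedModType R).

Definition is_linear_fun (f : X -> R) : Prop :=
  forall (a : R) (x y : X), f (a *: x + y) = a * f x + f y.

Definition Xdual : set (X -> R) :=
  [set f | is_linear_fun f /\ continuous f].

Definition dnorm (f : X -> R) : R :=
  sup [set `|f x| | x in [set x : X | `|x| <= 1]].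

Definition dual_ball : set (X -> R) := [set f | Xdual f /\ dnorm f <= 1].

Definition dcomb (a : R) (f g : X -> R) : X -> R := fun x => a * f x + g x.

(* Z^* for Z = X^*: norm-continuous (= bounded) linear functionals on X^*.
   Such a functional is given as a map (X -> R) -> R; only its values on
   X^* matter. *)
Definition bidual (phi : (X -> R) -> R) : Prop :=
  (forall (a : R) (f g : X -> R), Xdual f -> Xdual g ->
      phi (dcomb a f g) = a * phi f + phi g) /\
  (exists M : R, forall f, Xdual f -> `|phi f| <= M * dnorm f).

Definition bidual_nonzero (phi : (X -> R) -> R) : Prop :=
  exists f, Xdual f /\ phi f != 0.

Definition slice (A : set (X -> R)) (phi : (X -> R) -> R) (alpha : R)
  : set (X -> R) :=
  [set a | A a /\ phi a > sup [set phi b | b in A] - alpha].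

Definition comb_slices (n : nat) (lam : 'I_n -> R) (S : 'I_n -> set (X -> R))
  : set (X -> R) :=
  [set f | exists s : 'I_n -> X -> R, (forall i, S i (s i)) /\
           f = (fun x => \sum_(i < n) lam i * s i x)].

Definition ddiam (A : set (X -> R)) : R :=
  sup [set dnorm (fun x => f x - g x) | f in A & g in A].

Definition all_ccs_diam2 (A : set (X -> R)) : Prop :=
  forall (n : nat) (lam : 'I_n -> R) (phi : 'I_n -> (X -> R) -> R)
         (alpha : 'I_n -> R),
    (forall i, 0 < lam i) -> \sum_(i < n) lam i = 1 ->
    (forall i, bidual (phi i) /\ bidual_nonzero (phi i)) ->
    (forall i, 0 < alpha i) ->
    (forall i, slice A (phi i) (alpha i) !=set0) ->
    ddiam (comb_slices lam (fun i => slice A (phi i) (alpha i))) = 2.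

Definition dconvex (A : set (X -> R)) : Prop :=
  forall f g (t : R), A f -> A g -> 0 <= t <= 1 ->
    A (fun x => t * f x + (1 - t) * g x).

Definition dco (A : set (X -> R)) : set (X -> R) :=
  [set f | exists (n : nat) (lam : 'I_n -> R) (p : 'I_n -> X -> R),
     (forall i, 0 <= lam i) /\ \sum_(i < n) lam i = 1 /\
     (forall i, A (p i)) /\ f = (fun x => \sum_(i < n) lam i * p i x)].

Definition wstar_compact (A : set (X -> R)) : Prop :=
  @compact {ptws X -> R} A.

End Dual.

(* Main.v *)
Require Import Defs.
From HB Require Import structures.
From mathcomp Require Import all_boot all_order all_algebra.
From mathcomp Require Import all_classical all_reals all_analysis.
From mathcomp Require Import lra ring.
Set Implicit Arguments. Unset Strict Implicit. Unset Printing Implicit Defensive.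
Import Order.TTheory GRing.Theory Num.Theory.
Import numFieldNormedType.Exports.
Local Open Scope classical_set_scope.
Local Open Scope ring_scope.

Section H.
Variables (R : realType) (X : normedModType R).

Lemma lin0 (f : X -> R) : is_linear_fun f -> f 0 = 0.
Proof. move=> lf; have := lf 1 0 0; rewrite scale1r addr0 mul1r => h.
by apply: (addrI (f 0)); rewrite -h addr0. Qed.

Lemma linZ (f : X -> R) a x : is_linear_fun f -> f (a *: x) = a * f x.
Proof. by move=> lf; have := lf a x 0; rewrite addr0 lin0 // addr0. Qed.

Lemma dual_bnd (f : X -> R) : Xdual f ->
  exists B : R, forall x, `|x| <= 1 -> `|f x| <= B.
Proof.
move=> [lf cf].
have : f x @[x --> (0:X)] --> (0:R) by rewrite -(lin0 lf); exact: cf.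
move=> /cvgr0_norm_lt /(_ 1 ltr01) /nbhs_norm0P [d /= d0 Hd].
have d2 : 0 < d / 2 by rewrite divr_gt0.
exists (2 / d) => x x1.
have : `|(d/2) *: x| < d.
  rewrite normrZ gtr0_norm //.
  apply: (le_lt_trans (ler_wpM2l (ltW d2) x1)); rewrite mulr1; lra.
move=> /Hd /=; rewrite linZ // normrM gtr0_norm // => h.
have h2 : `|f x| < 1 / (d / 2) by rewrite ltr_pdivlMr // mulrC.
apply: ltW; apply: (lt_le_trans h2); rewrite div1r invf_div.
done.
Qed.

Lemma Xdual0 : Xdual (fun _ : X => (0:R)).
Proof. split; first by move=> a x y; rewrite mulr0 addr0.
by move=> x; exact: cvg_cst. Qed.

Lemma Xdual_dcomb a (f g : X -> R) : Xdual f -> Xdual g -> Xdual (dcomb a f g).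
Proof.
move=> [lf cf] [lg cg]; split.
  move=> b x y; rewrite /dcomb lf lg; ring.
move=> x; rewrite /dcomb; apply: cvgD; last exact: cg.
by apply: cvgMl_tmp; exact: cf.
Qed.

Lemma ball_bnd (f : X -> R) : dual_ball f -> forall x, `|x| <= 1 -> `|f x| <= 1.
Proof.
move=> [df n1] x x1; apply: le_trans n1.
have [B HB] := dual_bnd df.
apply: ub_le_sup; last by exists x.
by exists B => _ [y y1 <-]; exact: HB.
Qed.

Lemma dnorm_le (h : X -> R) B : (forall x, `|x| <= 1 -> `|h x| <= B) -> dnorm h <= B.
Proof.
move=> H; apply: ge_sup; first by exists `|h 0|, 0 => //=; rewrite normr0.
by move=> _ [y y1 <-]; exact: H.
Qed.

Lemma dnorm_ge0 (f : X -> R) : Xdual f -> 0 <= dnorm f.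
Proof.
move=> df; have [B HB] := dual_bnd df.
apply: (@le_trans _ _ `|f 0|) => //.
apply: ub_le_sup; last by exists 0 => //=; rewrite normr0.
by exists B => _ [y y1 <-]; exact: HB.
Qed.

Lemma bid0 (phi : (X -> R) -> R) : bidual phi -> phi (fun _ => 0) = 0.
Proof.
move=> [lp _]; have := lp 1 _ _ Xdual0 Xdual0.
have -> : dcomb 1 (fun _ : X => (0:R)) (fun _ => 0) = (fun _ => 0).
  by apply: funext => x; rewrite /dcomb mulr0 addr0.
rewrite mul1r => h; apply: (addrI (phi (fun _ => 0))); by rewrite -h addr0.
Qed.

Lemma bid_comb (phi : (X -> R) -> R) (a b : R) (c1 c2 : X -> R) : bidual phi -> Xdual c1 -> Xdual c2 ->
  phi (fun x => a * c1 x - b * c2 x) = a * phi c1 - b * phi c2.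
Proof.
move=> bp d1 d2.
have -> : (fun x => a * c1 x - b * c2 x) = dcomb a c1 (dcomb (-b) c2 (fun _ => 0)).
  by apply: funext => x; rewrite /dcomb; ring.
have [lp _] := bp.
rewrite lp //; last by apply: Xdual_dcomb => //; exact: Xdual0.
rewrite lp //; last exact: Xdual0.
rewrite bid0 //; ring.
Qed.

Lemma Xdual_comb (a b : R) (c1 c2 : X -> R) : Xdual c1 -> Xdual c2 -> Xdual (fun x => a * c1 x - b * c2 x).
Proof.
move=> d1 d2.
have -> : (fun x => a * c1 x - b * c2 x) = dcomb a c1 (dcomb (-b) c2 (fun _ => 0)).
  by apply: funext => x; rewrite /dcomb; ring.
by apply: Xdual_dcomb => //; apply: Xdual_dcomb => //; exact: Xdual0.
Qed.

Lemma bid_neg (phi : (X -> R) -> R) (s : X -> R) : bidual phi -> Xdual s ->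
  phi (fun x => - s x) = - phi s.
Proof.
move=> bp ds; have := bid_comb 0 1 bp ds ds.
have -> : (fun x => 0 * s x - 1 * s x) = (fun x => - s x).
  by apply: funext => x; ring.
move=> ->; ring.
Qed.

Lemma bid_bnd (phi : (X -> R) -> R) : bidual phi ->
  exists M, forall f, dual_ball f -> `|phi f| <= M.
Proof.
move=> [_ [M HM]]; exists `|M| => f [df n1].
apply: (le_trans (HM f df)).
have d0 := dnorm_ge0 df.
apply: (@le_trans _ _ (`|M| * dnorm f)); first by apply: ler_wpM2r => //; exact: ler_norm.
by rewrite -[leRHS]mulr1; apply: ler_wpM2l.
Qed.

Lemma bid_negf (phi : (X -> R) -> R) : bidual phi -> bidual (fun f => - phi f).
Proof.
move=> [lp [M HM]]; split.
  by move=> a f g df dg; rewrite lp //; ring.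
by exists M => f df; rewrite normrN; exact: HM.
Qed.

Lemma bidnz_negf (phi : (X -> R) -> R) : bidual_nonzero phi -> bidual_nonzero (fun f => - phi f).
Proof. by move=> [f [df nz]]; exists f; split => //; rewrite oppr_eq0. Qed.
End H.

Section Cp.
Variables (R : realType) (X : normedModType R).
Let T := {ptws X -> R}.

Lemma eval_cont (t : X) : continuous (fun h : T => h t).
Proof.
move=> f; have : {ptws, nbhs (f : T) --> f} by [].
by move/pointwise_cvgP => /(_ t).
Qed.

Definition gmap (p : (T * T) * R) : T := fun x => p.2 * p.1.1 x - (1 - p.2) * p.1.2 x.

Lemma gmap_cont : continuous gmap.
Proof.
move=> p; apply/pointwise_cvgP => t.
change ((fun q : (T * T) * R => q.2 * q.1.1 t - (1 - q.2) * q.1.2 t) @ nbhs p -->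
   (p.2 * p.1.1 t - (1 - p.2) * p.1.2 t)).
apply: cvgB; apply: cvgM.
- exact: cvg_snd.
- apply: (@continuous_comp _ _ _ (fun q : (T * T) * R => q.1.1) (fun h : T => h t)).
    apply: (@continuous_comp _ _ _ fst fst); [exact: cvg_fst | exact: cvg_fst].
  exact: eval_cont.
- apply: cvgB; [exact: cvg_cst | exact: cvg_snd].
- apply: (@continuous_comp _ _ _ (fun q : (T * T) * R => q.1.2) (fun h : T => h t)).
    apply: (@continuous_comp _ _ _ fst snd); [exact: cvg_fst | exact: cvg_snd].
  exact: eval_cont.
Qed.
End Cp.

Section CC.
Variables (R : realType) (X : normedModType R) (C : set (X -> R)).
Hypotheses (C0 : C !=set0) (cC : dconvex C) (bC : C `<=` @dual_ball R X).

Definition rep (f : X -> R) := exists a b c1 c2,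
  [/\ 0 <= a /\ 0 <= b, a + b = 1, C c1, C c2 & f = (fun x => a * c1 x - b * c2 x)].

Lemma mix p q c c' : 0 <= p -> 0 <= q -> C c -> C c' ->
  exists2 c'', C c'' & forall x, p * c x + q * c' x = (p + q) * c'' x.
Proof.
move=> p0 q0 Cc Cc'; case: (eqVneq (p + q) 0) => [pq0|pq].
  exists c => // x; have -> : p = 0 by lra.
  have -> : q = 0 by lra. ring.
have pq0 : 0 < p + q by rewrite lt_neqAle eq_sym pq addr_ge0.
pose t := p / (p + q).
have t01 : 0 <= t <= 1.
  rewrite /t; apply/andP; split; first by apply: divr_ge0 => //; exact: addr_ge0.
  by rewrite ler_pdivrMr // mul1r lerDl.
exists (fun x => t * c x + (1 - t) * c' x); first exact: cC.
move=> x; rewrite /t; field; exact: pq.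
Qed.

Lemma dco_rep_gen n (lam : 'I_n -> R) (p : 'I_n -> X -> R) :
 (forall i, 0 <= lam i) -> (forall i, (C `|` [set f | C (fun x => - f x)]) (p i)) ->
 exists a b c1 c2, [/\ 0 <= a /\ 0 <= b, a + b = \sum_(i < n) lam i, C c1, C c2 &
   (fun x => \sum_(i < n) lam i * p i x) = (fun x => a * c1 x - b * c2 x)].
Proof.
elim: n lam p => [|n IH] lam p l0 pC.
  case: C0 => c0 Cc0; exists 0, 0, c0, c0; split => //; first by rewrite big_ord0 addr0.
  by apply: funext => x; rewrite big_ord0; ring.
have [a [b [c1 [c2 [[a0 b0] ab Cc1 Cc2 E]]]]] :=
  IH (fun i => lam (widen_ord (leqnSn n) i)) (fun i => p (widen_ord (leqnSn n) i))
     (fun i => l0 _) (fun i => pC _).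
have E' : forall x, \sum_(i < n.+1) lam i * p i x =
    a * c1 x - b * c2 x + lam ord_max * p ord_max x.
  by move=> x; rewrite big_ord_recr /=; congr (_ + _); exact: (congr1 (fun h => h x) E).
have lm := l0 ord_max.
case: (pC ord_max) => Hp.
- have [c'' Cc'' Hc] := mix a0 lm Cc1 Hp.
  exists (a + lam ord_max), b, c'', c2; split => //.
  + by split => //; exact: addr_ge0.
  + by rewrite big_ord_recr /= -ab; ring.
  + by apply: funext => x; rewrite E' -Hc; ring.
- have [c'' Cc'' Hc] := mix b0 lm Cc2 Hp.
  exists a, (b + lam ord_max), c1, c''; split => //.
  + by split => //; exact: addr_ge0.
  + by rewrite big_ord_recr /= -ab; ring.
  + by apply: funext => x; rewrite E' -Hc /=; ring.
Qed.


Lemma rep_dco f : rep f -> dco (C `|` [set f | C (fun x => - f x)]) f.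
Proof.
move=> [a [b [c1 [c2 [[a0 b0] ab Cc1 Cc2 ->]]]]].
exists 2, (fun i => if val i == 0%N then a else b),
  (fun i => if val i == 0%N then c1 else (fun x => - c2 x)).
split; first by move=> i; case: ifP.
split; first by rewrite !big_ord_recr big_ord0 /= add0r.
split.
  move=> i; case: ifP => _; first by left.
  by right; rewrite /=; have -> : (fun x => - - c2 x) = c2 by apply: funext => x; rewrite opprK.
by apply: funext => x; rewrite !big_ord_recr big_ord0 /= add0r; ring.
Qed.

Lemma dco_rep f : dco (C `|` [set f | C (fun x => - f x)]) f -> rep f.
Proof.
move=> [n [lam [p [l0 [s1 [pC ->]]]]]].
have [a [b [c1 [c2 [ab0 ab Cc1 Cc2 E]]]]] := dco_rep_gen l0 pC.
by exists a, b, c1, c2; split => //; rewrite ab.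
Qed.

Lemma K_rep : dco (C `|` [set f | C (fun x => - f x)]) = rep.
Proof. by apply/seteqP; split => f; [exact: dco_rep | exact: rep_dco]. Qed.

Lemma rep_ball f : rep f -> dual_ball f.
Proof.
move=> [a [b [c1 [c2 [[a0 b0] ab Cc1 Cc2 ->]]]]].
have [d1 _] := bC Cc1; have [d2 _] := bC Cc2.
split; first exact: Xdual_comb.
apply: dnorm_le => x x1.
apply: (le_trans (ler_normB _ _)); rewrite !normrM (ger0_norm a0) (ger0_norm b0).
have h1 := ball_bnd (bC Cc1) x1; have h2 := ball_bnd (bC Cc2) x1.
rewrite -ab; apply: lerD.
  by rewrite -[leRHS]mulr1 ler_wpM2l.
by rewrite -[leRHS]mulr1 ler_wpM2l.
Qed.

Lemma C_rep c : C c -> rep c.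
Proof.
move=> Cc; exists 1, 0, c, c; split => //; first by rewrite addr0.
by apply: funext => x; ring.
Qed.

Lemma negC_rep c : C c -> rep (fun x => - c x).
Proof.
move=> Cc; exists 0, 1, c, c; split => //; first by rewrite add0r.
by apply: funext => x; ring.
Qed.

Lemma rep_convex : dconvex rep.
Proof.
move=> f g t [a [b [c1 [c2 [[a0 b0] ab Cc1 Cc2 ->]]]]]
  [a' [b' [c1' [c2' [[a0' b0'] ab' Cc1' Cc2' ->]]]]] /andP[t0 t1].
have t0' : 0 <= 1 - t by rewrite subr_ge0.
have [d1 Cd1 Hd1] := mix (mulr_ge0 t0 a0) (mulr_ge0 t0' a0') Cc1 Cc1'.
have [d2 Cd2 Hd2] := mix (mulr_ge0 t0 b0) (mulr_ge0 t0' b0') Cc2 Cc2'.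
exists (t * a + (1 - t) * a'), (t * b + (1 - t) * b'), d1, d2; split => //.
- by split; apply: addr_ge0; apply: mulr_ge0.
- have -> : t * a + (1 - t) * a' + (t * b + (1 - t) * b') = t * (a + b) + (1 - t) * (a' + b') by ring.
  by rewrite ab ab'; ring.
- apply: funext => x; rewrite -Hd1 -Hd2; ring.
Qed.

Lemma rep_compact : @compact {ptws X -> R} C -> @compact {ptws X -> R} rep.
Proof.
move=> cpC.
have -> : rep = (@gmap R X) @` ((C `*` C) `*` `[0, 1]%classic).
  apply/seteqP; split => f.
    move=> [a [b [c1 [c2 [[a0 b0] ab Cc1 Cc2 ->]]]]].
    exists ((c1, c2), a); first by split => //=; rewrite in_itv /= a0 /=; lra.
    by apply: funext => x; rewrite /gmap /=; have -> : b = 1 - a by lra.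
  move=> [[[c1 c2] a] [[Cc1 Cc2] /=]]; rewrite in_itv /= => /andP[a0 a1] <-.
  exists a, (1 - a), c1, c2; split => //; last by ring.
  by split => //; lra.
apply: (@continuous_compact _ {ptws X -> R} (@gmap R X)); first by apply: continuous_subspaceT; exact: gmap_cont.
by apply: compact_setX; [exact: compact_setX | exact: segment_compact].
Qed.

Lemma bndC (psi : (X -> R) -> R) : bidual psi -> has_ubound [set psi b | b in C].
Proof.
move=> bp; have [M HM] := bid_bnd bp; exists M => _ [b Cb <-].
exact: le_trans (ler_norm _) (HM _ (bC Cb)).
Qed.

Lemma supK_le (phi : (X -> R) -> R) : bidual phi ->
  sup [set phi b | b in rep] <=
  Num.max (sup [set phi b | b in C]) (sup [set - phi b | b in C]).
Proof.
move=> bp; set m := Num.max _ _.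
have [c0 Cc0] := C0.
apply: ge_sup; first by exists (phi c0), c0 => //; exact: C_rep.
move=> _ [f [a [b [c1 [c2 [[a0 b0] ab Cc1 Cc2 ->]]]]] <-].
have [d1 _] := bC Cc1; have [d2 _] := bC Cc2.
rewrite bid_comb //.
have h1 : phi c1 <= sup [set phi b | b in C] by apply: ub_le_sup; [exact: bndC | exists c1].
have h2 : - phi c2 <= sup [set - phi b | b in C].
  by apply: ub_le_sup; [exact: (bndC (bid_negf bp)) | exists c2].
have m1 : sup [set phi b | b in C] <= m by rewrite le_max lexx.
have m2 : sup [set - phi b | b in C] <= m by rewrite le_max lexx orbT.
have i1 : a * phi c1 <= a * m by apply: ler_wpM2l => //; exact: le_trans h1 m1.
have i2 : b * (- phi c2) <= b * m by apply: ler_wpM2l => //; exact: le_trans h2 m2.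
have e : a * m + b * m = m by rewrite -mulrDl ab mul1r.
rewrite mulrN in i2; lra.
Qed.

Lemma rep_diam2 : all_ccs_diam2 C -> all_ccs_diam2 rep.
Proof.
move=> HC n lam phi alpha lam0 lam1 bphi al0 slne.
pose sC (psi : (X -> R) -> R) := sup [set psi b | b in C].
pose sg i := sup [set - phi i b | b in C] <= sup [set phi i b | b in C].
pose psi i := if sg i then phi i else (fun f => - phi i f).
have bpsi : forall i, bidual (psi i) /\ bidual_nonzero (psi i).
  move=> i; have [b1 b2] := bphi i; rewrite /psi; case: ifP => _ //.
  by split; [exact: bid_negf | exact: bidnz_negf].
have slC : forall i, slice C (psi i) (alpha i) !=set0.
  move=> i; have [c0 Cc0] := C0.
  have ne : [set psi i b | b in C] !=set0 by exists (psi i c0), c0.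
  have lt : sup [set psi i b | b in C] - alpha i < sup [set psi i b | b in C].
    by rewrite ltrBlDr ltrDl.
  have [y [b Cb <-] Hy] := sup_gt ne lt.
  by exists b.
have HD := HC n lam psi alpha lam0 lam1 bpsi al0 slC.
have incl : forall i s s', slice C (psi i) (alpha i) s -> slice C (psi i) (alpha i) s' ->
    slice rep (phi i) (alpha i) (if sg i then s else fun x => - s' x).
  move=> i s s'; have [bp _] := bphi i; have := supK_le bp.
  rewrite /psi /sg; case: ifP => Hs Hm [Cs Hsl] [Cs' Hsl'].
    split; first exact: C_rep.
    rewrite (max_l Hs) in Hm.
    apply: le_lt_trans Hsl; by rewrite lerD2r.
  split; first exact: negC_rep.
  have [ds _] := bC Cs'.
  rewrite bid_neg //.
  have Hs' : sup [set phi i b | b in C] <= sup [set - phi i b | b in C].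
    by apply: ltW; rewrite ltNge Hs.
  rewrite (max_r Hs') in Hm.
  apply: le_lt_trans Hsl'; by rewrite lerD2r.
move: HD; rewrite /ddiam.
set EC := (X in sup X = _) => HD.
set EK := (X in sup X = _).
have ubK : ubound EK 2.
  move=> _ [f [s [Hs ->]] [g [s' [Hs' ->]] <-]].
  apply: dnorm_le => x x1; rewrite -sumrB.
  apply: (le_trans (ler_norm_sum _ _ _)).
  rewrite -[leRHS]mul1r -lam1 mulr_suml; apply: ler_sum => i _.
  rewrite -mulrBr normrM gtr0_norm //; apply: ler_wpM2l; first exact: ltW.
  have [Hr _] := Hs i; have [Hr' _] := Hs' i.
  have b1 := ball_bnd (rep_ball Hr) x1; have b2 := ball_bnd (rep_ball Hr') x1.
  apply: (le_trans (ler_normB _ _)); lra.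
have neC : EC !=set0.
  apply/set0P/eqP => E0; move: HD; rewrite E0 sup0 => /eqP.
  by rewrite eq_sym pnatr_eq0.
have approx : forall e, 0 < e -> exists2 y, EK y & 2 - e < y.
  move=> e e0.
  have lt : 2 - e < sup EC by rewrite HD ltrBlDr ltrDl.
  have [_ [f [s [Hs ->]] [g [s' [Hs' ->]] <-]] Hy] := sup_gt neC lt.
  pose u i := if sg i then s i else fun x => - s' i x.
  pose v i := if sg i then s' i else fun x => - s i x.
  exists (dnorm (fun x => (\sum_(i < n) lam i * u i x) - (\sum_(i < n) lam i * v i x))).
    exists (fun x => \sum_(i < n) lam i * u i x).
      by exists u; split => // i; exact: incl.
    exists (fun x => \sum_(i < n) lam i * v i x) => //.
    by exists v; split => // i; exact: incl.
  suff -> : (fun x => (\sum_(i < n) lam i * u i x) - (\sum_(i < n) lam i * v i x)) =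
    (fun x => (\sum_(i < n) lam i * s i x) - (\sum_(i < n) lam i * s' i x)) by [].
  apply: funext => x; rewrite -!sumrB; apply: eq_bigr => i _.
  by rewrite /u /v; case: (sg i) => /=; ring.
have neK : EK !=set0 by have [y Hy _] := approx 1 ltr01; exists y.
apply/eqP; rewrite eq_le; apply/andP; split; first exact: ge_sup.
rewrite leNgt; apply/negP => lt.
have e0 : 0 < 2 - sup EK by rewrite subr_gt0.
have [y Ey Hy] := approx (2 - sup EK) e0.
have := ub_le_sup (ex_intro _ 2 ubK) Ey; lra.
Qed.
End CC.

Theorem mainTheorem11 (R : realType) (X : completeNormedModType R)
  (C : set (X -> R)) :
  C !=set0 -> dconvex C -> wstar_compact C -> C `<=` @dual_ball R X ->
  all_ccs_diam2 C ->
  let K := dco (C `|` [set f | C (fun x => - f x)]) in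
  [/\ wstar_compact K, dconvex K, K `<=` @dual_ball R X & all_ccs_diam2 K].
Proof.
move=> C0 cC cpC bC HC K.
rewrite /K (K_rep C0 cC); split.
- exact: rep_compact.
- exact: rep_convex.
- by move=> f; exact: rep_ball.
- exact: rep_diam2.
Qed.
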